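(* Let $\mathcal{A}$ be a complete deterministic timed automaton (CTA). If two valid reset-clocked words $\gamma_{r1},\gamma_{r2}$ of $\mathcal{A}$ reach the same symbolic state of $\mathcal{A}$, then $\gamma_{r1}\sim_{\mathscr{L}_r(\mathcal{A})}\gamma_{r2}$.
   Context: Let $\Sigma$ be a finite alphabet and $\mathcal{C}=\{c_1,\dots,c_m\}$ a finite set of clocks. A clock constraint is a finite conjunction of atomic constraints $c\sim k$ ($c\in\mathcal{C}$, $k\in\mathbb{N}$, ${\sim}\in\{<,\le,=,\ge,>\}$). A clock valuation is $\nu:\mathcal{C}\to\mathbb{R}_{\ge0}$ (a vector in $\mathbb{R}_{\ge0}^m$); $\nu+d$ adds $d$ to all clocks, $[\mathcal{B}\to0]\nu$ resets clocks in $\mathcal{B}$. A timed automaton is $\mathcal{A}=(\Sigma,L,l_0,F,\mathcal{C},\Delta)$ with finite location set $L$, initial $l_0$, accepting $F\subseteq L$, transitions $\Delta\subseteq L\times\Sigma\times\Phi(\mathcal{C})\times2^{\mathcal{C}}\times L$. A run over a delay-timed word $(\sigma_1,t_1)\cdots(\sigma_n,t_n)$ is $(l_0,\nu_0)\xrightarrow{t_1,\sigma_1}\cdots\xrightarrow{t_n,\sigma_n}(l_n,\nu_n)$ with $\nu_0\equiv0$ and transitions $(l_{i-1},\sigma_i,\phi_i,\mathcal{B}_i,l_i)\in\Delta$ with $\nu_{i-1}+t_i$ satisfying $\phi_i$ and $\nu_i=[\mathcal{B}_i\to0](\nu_{i-1}+t_i)$; accepting if $l_n\in F$. $\mathcal{A}$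 is a CTA if every delay-timed word has exactly one run. The reset-clocked word of the run is $(\sigma_1,\mathbf{v}_1,\mathbf{b}_1)\cdots(\sigma_n,\mathbf{v}_n,\mathbf{b}_n)$ with $\mathbf{v}_i=\nu_{i-1}+t_i$ and $\mathbf{b}_{i,j}=\top$ iff $c_j\in\mathcal{B}_i$ (else $\bot$). $\mathscr{L}_r(\mathcal{A})$ is the set of reset-clocked words of accepting runs. A reset-clocked word (any finite sequence in $(\Sigma\times\mathbb{R}_{\ge0}^m\times\{\top,\bot\}^m)^*$) is valid for $\mathcal{A}$ if it is the reset-clocked word of some run, and then reaches that run's final symbolic state $(l_n,\llbracket\nu_n\rrbracket)$. $resets(\cdot)$ returns $\mathbf{b}_1,\dots,\mathbf{b}_n$; $vw(\cdot)$ drops resets. Regions: with $\kappa(c)$ the largest integer in guards of $\mathcal{A}$ over $c$, $\nu,\nu'$ are region-equivalent iff (i) for all $c$, $\lfloor\nu(c)\rfloor=\lfloor\nu'(c)\rfloor$ or both exceed $\kappa(c)$; (ii) for $c$ with $\nu(c)\le\kappa(c)$, $\mathrm{frac}(\nu(c))=0$ iff $\mathrm{frac}(\nu'(c))=0$; (iii) for $c_i,c_j$ with $\nu(c_i)\le\kappa(c_i),\nu(c_j)\le\kappa(c_j)$, $\mathrm{frac}(\nu(c_i))\le\mathrm{frac}(\nu(c_j))$ iff $\mathrm{frac}(\nu'(c_i))\le\mathrm{frac}(\nu'(c_j))$; $\llbracket\nu\rrbracket$ denotes the region, symbolic states are pairs (location, region). A region word is a finite sequence of pairs $(\sigma,R)$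 with $R$ a region; a clocked word maps to its region word $\llbracket\cdot\rrbracket$ componentwise. $\mathit{vs}_{\mathcal{A}}(\gamma_r,\xi)$ is the set of reset-clocked $\gamma_r'$ with $\llbracket vw(\gamma_r')\rrbracket=\xi$ and $\gamma_r\gamma_r'$ valid for $\mathcal{A}$. The relation $\gamma_{r1}\sim_{\mathscr{L}_r(\mathcal{A})}\gamma_{r2}$ holds iff for every region word $\xi$ and all $\gamma_{r1}'\in\mathit{vs}_{\mathcal{A}}(\gamma_{r1},\xi)$, $\gamma_{r2}'\in\mathit{vs}_{\mathcal{A}}(\gamma_{r2},\xi)$: $\gamma_{r1}\gamma_{r1}'\in\mathscr{L}_r(\mathcal{A})$ iff $\gamma_{r2}\gamma_{r2}'\in\mathscr{L}_r(\mathcal{A})$, and $resets(\gamma_{r1}')=resets(\gamma_{r2}')$. *)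

(* Defs.v *)
From Stdlib Require Import Reals List.
From mathcomp Require Import all_boot.
Set Implicit Arguments.
Unset Strict Implicit.
Unset Printing Implicit Defensive.

Local Open Scope R_scope.

Inductive cmp := CLt | CLe | CEq | CGe | CGt.

Definition cmp_sem (o : cmp) (x y : R) : Prop :=
  match o with
  | CLt => x < y | CLe => x <= y | CEq => x = y | CGe => x >= y | CGt => x > y
  end.

Section TA.
Variables (Sigma L C : finType).

Definition atom := (C * cmp * nat)%type.
Definition guard := seq atom.

Definition valuation := C -> R.

Definition sat_atom (nu : valuation) (a : atom) : Prop :=
  let '(c, o, k) := a in cmp_sem o (nu c) (INR k).
Definition sat (nu : valuation) (g : guard) : Prop :=
  forall a, List.In a g -> sat_atom nu a.

Definition shift (nu : valuation) (d : R) : valuation := fun c => nu c + d.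
Definition reset (B : {set C}) (nu : valuation) : valuation :=
  fun c => if c \in B then 0 else nu c.
Definition zero_val : valuation := fun _ => 0.

Definition trans := (L * Sigma * guard * {set C} * L)%type.

Record TA := mkTA {
  l0 : L;
  Fin : L -> Prop;
  Delta : seq trans
}.

(** reset-clocked letter (sigma, v, b); the reset vector b in {T,F}^m is
    encoded as the set of clocks c_j with b_j = T. *)
Definition rcletter := (Sigma * valuation * {set C})%type.
Definition rcword := seq rcletter.

(** [exec A l nu w ds g l' nu'] : starting from configuration (l,nu), the
    delay-timed word w has run with transition sequence ds, producing the
    reset-clocked word g and ending in configuration (l',nu'). *)
Inductive exec (A : TA) : L -> valuation -> seq (Sigma * R) -> seq trans ->
    rcword -> L -> valuation -> Prop :=
| exec_nil l nu : exec A l nu [::] [::] [::] l nu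
| exec_cons l nu s t phi B l1 w ds g l' nu' :
    List.In (l, s, phi, B, l1) (Delta A) ->
    0 <= t ->
    sat (shift nu t) phi ->
    exec A l1 (reset B (shift nu t)) w ds g l' nu' ->
    exec A l nu ((s, t) :: w) ((l, s, phi, B, l1) :: ds)
         ((s, shift nu t, B) :: g) l' nu'.

Definition delay_word (w : seq (Sigma * R)) : Prop :=
  forall s t, List.In (s, t) w -> 0 <= t.

Definition is_run (A : TA) (w : seq (Sigma * R)) (ds : seq trans) : Prop :=
  exists g l nu, exec A (l0 A) zero_val w ds g l nu.

Definition CTA (A : TA) : Prop :=
  forall w, delay_word w -> exists! ds, is_run A w ds.

Definition Lr (A : TA) (g : rcword) : Prop :=
  exists w ds l nu, exec A (l0 A) zero_val w ds g l nu /\ Fin A l.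

Definition valid (A : TA) (g : rcword) : Prop :=
  exists w ds l nu, exec A (l0 A) zero_val w ds g l nu.

(** kappa(c): largest integer constant in guards of A over clock c
    (0 if c does not occur in any guard) *)
Definition kappa (A : TA) (c : C) : nat :=
  foldr maxn 0%N [seq a.2 | a <- flatten [seq tr.1.1.2 | tr <- Delta A]
                          & a.1.1 == c].

Definition region_equiv (A : TA) (nu nu' : valuation) : Prop :=
  (forall c, Int_part (nu c) = Int_part (nu' c) \/
             (nu c > INR (kappa A c) /\ nu' c > INR (kappa A c))) /\
  (forall c, nu c <= INR (kappa A c) ->
             (frac_part (nu c) = 0 <-> frac_part (nu' c) = 0)) /\
  (forall ci cj, nu ci <= INR (kappa A ci) -> nu cj <= INR (kappa A cj) ->
       (frac_part (nu ci) <= frac_part (nu cj) <->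
        frac_part (nu' ci) <= frac_part (nu' cj))).

Definition region (A : TA) (nu : valuation) : valuation -> Prop :=
  fun nu' => region_equiv A nu nu'.

Definition sym_state (A : TA) (l : L) (nu : valuation) :=
  (l, region A nu).

Definition reaches (A : TA) (g : rcword) (l : L) (nu : valuation) : Prop :=
  exists w ds, exec A (l0 A) zero_val w ds g l nu.

Definition region_word := seq (Sigma * (valuation -> Prop)).

Definition region_of (A : TA) (g : rcword) : region_word :=
  [seq (x.1.1, region A x.1.2) | x <- g].

Definition resets (g : rcword) : seq {set C} := [seq x.2 | x <- g].

Definition vs (A : TA) (g : rcword) (xi : region_word) (g' : rcword) : Prop :=
  region_of A g' = xi /\ valid A (g ++ g').

Definition rc_equiv (A : TA) (g1 g2 : rcword) : Prop :=
  forall (xi : region_word) (g1' g2' : rcword),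
    vs A g1 xi g1' -> vs A g2 xi g2' ->
    (Lr A (g1 ++ g1') <-> Lr A (g2 ++ g2')) /\ resets g1' = resets g2'.

End TA.

(* Main.v *)
Require Import Defs.
From Stdlib Require Import Reals List Lra Lia ZArith.
From mathcomp Require Import all_boot.

Open Scope R_scope.

Lemma cmp_transfer o x y k :
  Int_part x = Int_part y ->
  (frac_part x = 0 <-> frac_part y = 0) ->
  cmp_sem o x (INR k) -> cmp_sem o y (INR k).
Proof.
  intros HI Hf.
  unfold frac_part in Hf. rewrite <- HI in Hf.
  destruct (base_Int_part x) as [Hx1 Hx2].
  destruct (base_Int_part y) as [Hy1 Hy2].
  rewrite <- HI in Hy1, Hy2.
  rewrite INR_IZR_INZ.
  set (N := Int_part x) in *.
  set (K := Z.of_nat k).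
  destruct (Z.lt_total N K) as [Hlt|[Heq|Hgt]].
  - assert (H1 : (N + 1 <= K)%Z) by lia.
    apply IZR_le in H1. rewrite plus_IZR in H1.
    destruct o; simpl; lra.
  - rewrite <- Heq.
    destruct (Rle_lt_or_eq_dec _ _ Hx1) as [Ex|Ex];
    destruct (Rle_lt_or_eq_dec _ _ Hy1) as [Ey|Ey].
    + destruct o; simpl; lra.
    + assert (y - IZR N = 0) by lra.
      assert (x - IZR N = 0) by (apply Hf; auto). lra.
    + assert (x - IZR N = 0) by lra.
      assert (y - IZR N = 0) by (apply Hf; auto). lra.
    + destruct o; simpl; lra.
  - assert (H1 : (K + 1 <= N)%Z) by lia.
    apply IZR_le in H1. rewrite plus_IZR in H1.
    destruct o; simpl; lra.
Qed.

Lemma In_foldr_max (s : seq nat) n : List.In n s -> (n <= foldr maxn 0 s)%N.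
Proof.
  elim: s => [//|x s IH] /= [->|H]; first exact: leq_maxl.
  apply: leq_trans (IH H) _; exact: leq_maxr.
Qed.

Lemma In_seqmap {T U : Type} (f : T -> U) x s : List.In x s -> List.In (f x) (map f s).
Proof. elim: s => [//|y s IH] /= [->|H]; [left|right; auto]; done. Qed.

Lemma In_seqfilter {T : Type} (p : pred T) x s : List.In x s -> p x -> List.In x (filter p s).
Proof.
  elim: s => [//|y s IH] /= [->|H] Hp; first by rewrite Hp; left.
  case: (p y); [right|]; auto.
Qed.

Lemma In_seqcat {T : Type} x (s1 s2 : seq T) : List.In x s1 \/ List.In x s2 -> List.In x (s1 ++ s2).
Proof.
  elim: s1 => [|y s IH] /=; first by case.
  case=> [[->|H]|H]; [left|right; apply IH|right; apply IH]; auto.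
Qed.

Lemma In_seqcat_inv {T : Type} x (s1 s2 : seq T) : List.In x (s1 ++ s2) -> List.In x s1 \/ List.In x s2.
Proof.
  elim: s1 => [|y s IH] /=; first by right.
  case=> [->|H]; first by left; left.
  case: (IH H); auto.
Qed.

Lemma In_flatten {T : Type} x (t : seq T) ss : List.In t ss -> List.In x t -> List.In x (flatten ss).
Proof.
  elim: ss => [//|u ss IH] /= [->|H] Hx; apply In_seqcat; auto.
Qed.

Lemma kappa_bound {Sigma L C : finType} (A : TA Sigma L C) l s phi B m c o k :
  List.In (l, s, phi, B, m) (Defs.Delta A) -> List.In (c, o, k) phi -> (k <= kappa A c)%N.
Proof.
  move=> Ht Ha. rewrite /kappa.
  apply In_foldr_max.
  apply (@In_seqmap _ _ (fun a : atom C => a.2) (c, o, k)).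
  apply In_seqfilter; last by rewrite /= eqxx.
  apply (@In_flatten _ _ phi) => //.
  exact: (@In_seqmap _ _ (fun tr : trans Sigma L C => tr.1.1.2) (l, s, phi, B, m)).
Qed.

Lemma region_refl {Sigma L C : finType} (A : TA Sigma L C) v : region_equiv A v v.
Proof. split; [|split]; intros; [left|..]; tauto. Qed.

Lemma sat_transfer {Sigma L C : finType} (A : TA Sigma L C) l s phi B m v1 v2 :
  List.In (l, s, phi, B, m) (Defs.Delta A) -> region A v1 = region A v2 ->
  sat v2 phi -> sat v1 phi.
Proof.
  move=> Ht Hr H2 [[c o] k] Ha.
  have E12 : region_equiv A v1 v2 by change (region A v1 v2); rewrite Hr; apply region_refl.
  have E21 : region_equiv A v2 v1 by change (region A v2 v1); rewrite -Hr; apply region_refl.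
  have Hk := kappa_bound A _ _ _ _ _ _ _ _ Ht Ha. move/leP: Hk => Hk. apply le_INR in Hk.
  have := H2 _ Ha. rewrite /sat_atom => Hc.
  destruct E21 as [I21 [F21 _]]. destruct E12 as [I12 [F12 _]].
  have Hbig : v2 c > INR (kappa A c) /\ v1 c > INR (kappa A c) -> cmp_sem o (v1 c) (INR k).
    by move=> [? ?]; destruct o; simpl in *; lra.
  case: (I21 c) => [HI|]; last by [].
  case: (Rle_or_lt (v2 c) (INR (kappa A c))) => H2c.
    exact: (cmp_transfer _ _ _ _ HI (F21 c H2c) Hc).
  case: (Rle_or_lt (v1 c) (INR (kappa A c))) => H1c; last by apply Hbig.
  apply: (cmp_transfer _ _ _ _ HI) Hc. split; intro; apply (F12 c H1c); auto.
Qed.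


Lemma exec_app {Sigma L C : finType} (A : TA Sigma L C) l nu w ds g l' nu' w2 ds2 g2 l'' nu'' :
  exec A l nu w ds g l' nu' -> exec A l' nu' w2 ds2 g2 l'' nu'' ->
  exec A l nu (w ++ w2) (ds ++ ds2) (g ++ g2) l'' nu''.
Proof.
  induction 1; intros Hq; simpl; auto.
  eapply exec_cons; eauto.
Qed.

Lemma exec_delay {Sigma L C : finType} (A : TA Sigma L C) l nu w ds g l' nu' :
  exec A l nu w ds g l' nu' -> delay_word w.
Proof.
  induction 1; intros s0 t0 Hin; simpl in Hin; first by [].
  destruct Hin as [E|Hin]; first by case: E => _ <-.
  exact: (IHexec s0 t0 Hin).
Qed.

Lemma exec_nil_inv {Sigma L C : finType} (A : TA Sigma L C) l nu w ds l' nu' :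
  exec A l nu w ds [::] l' nu' -> l' = l /\ nu' = nu.
Proof. intros H; inversion H; subst; auto. Qed.

Lemma exec_cons_inv {Sigma L C : finType} (A : TA Sigma L C) l nu w ds a g l' nu' :
  exec A l nu w ds (a :: g) l' nu' ->
  exists s t phi B l1 w' ds',
    a = (s, Defs.shift nu t, B) /\ w = (s, t) :: w' /\ ds = (l, s, phi, B, l1) :: ds' /\
    List.In (l, s, phi, B, l1) (Defs.Delta A) /\ 0 <= t /\ Defs.sat (Defs.shift nu t) phi /\
    exec A l1 (Defs.reset B (Defs.shift nu t)) w' ds' g l' nu'.
Proof.
  intros H; inversion H; subst.
  do 7 eexists; repeat split; eauto.
Qed.

Lemma exec_split {Sigma L C : finType} (A : TA Sigma L C) g1 g2 : forall l nu w ds l' nu',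
  exec A l nu w ds (g1 ++ g2) l' nu' ->
  exists w1 w2 ds1 ds2 lm nm, exec A l nu w1 ds1 g1 lm nm /\ exec A lm nm w2 ds2 g2 l' nu'.
Proof.
  induction g1 as [|a g1 IH]; intros l nu w ds l' nu' H.
  - exists [::], w, [::], ds, l, nu; split; [constructor|exact H].
  - simpl in H. apply exec_cons_inv in H.
    destruct H as [s [t [phi [B [l1 [w' [ds' [Ea [Ew [Eds [Hin [Ht [Hs He]]]]]]]]]]]]].
    destruct (IH _ _ _ _ _ _ He) as [w1 [w2 [ds1 [ds2 [lm [nm [H1 H2]]]]]]].
    exists ((s, t) :: w1), w2, ((l, s, phi, B, l1) :: ds1), ds2, lm, nm.
    split; last exact H2. subst a. eapply exec_cons; eauto.
Qed.

Lemma det_step {Sigma L C : finType} (A : TA Sigma L C) w ds g l nu s t phi1 B1 m1 phi2 B2 m2 :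
  CTA A -> exec A (l0 A) (@zero_val C) w ds g l nu ->
  List.In (l, s, phi1, B1, m1) (Defs.Delta A) ->
  List.In (l, s, phi2, B2, m2) (Defs.Delta A) -> 0 <= t ->
  Defs.sat (Defs.shift nu t) phi1 -> Defs.sat (Defs.shift nu t) phi2 ->
  phi1 = phi2 /\ B1 = B2 /\ m1 = m2.
Proof.
  intros HC He H1 H2 Ht S1 S2.
  have dw : delay_word (w ++ [:: (s, t)]).
    intros s0 t0 Hin. destruct (In_seqcat_inv _ _ _ Hin) as [Hi|Hi].
    + eapply exec_delay; [exact He|exact Hi].
    + destruct Hi as [E|[]]. by case: E => _ <-.
  destruct (HC _ dw) as [ds0 [_ Hu]].
  have R1 : is_run A (w ++ [:: (s, t)]) (ds ++ [:: (l, s, phi1, B1, m1)]).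
    do 3 eexists. eapply exec_app; [exact He|]. eapply exec_cons; eauto. constructor.
  have R2 : is_run A (w ++ [:: (s, t)]) (ds ++ [:: (l, s, phi2, B2, m2)]).
    do 3 eexists. eapply exec_app; [exact He|]. eapply exec_cons; eauto. constructor.
  have E := etrans (esym (Hu _ R1)) (Hu _ R2).
  rewrite !cats1 in E. apply rcons_injr in E. case: E. auto.
Qed.

Lemma det_exec {Sigma L C : finType} (A : TA Sigma L C) : CTA A ->
  forall l nu w1 ds1 h l1 n1, exec A l nu w1 ds1 h l1 n1 ->
  forall w0 ds0 g0 w2 ds2 l2 n2,
  exec A (l0 A) (@zero_val C) w0 ds0 g0 l nu ->
  exec A l nu w2 ds2 h l2 n2 -> l1 = l2 /\ n1 = n2.
Proof.
  intros HC. induction 1 as [l nu|l nu s t phi B l1 w ds g l' nu' Hin Ht Hs He IH];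
    intros w0 ds0 g0 w2 ds2 l2 n2 H0 H2.
  - destruct (exec_nil_inv _ _ _ _ _ _ _ H2). subst; auto.
  - apply exec_cons_inv in H2.
    destruct H2 as [s' [t' [phi' [B' [l1' [w' [ds' [Ea [Ew [Eds [Hin' [Ht' [Hs' He']]]]]]]]]]]]].
    case: Ea => Es Ev EB. subst s' B'. rewrite -Ev in Hs' He'.
    destruct (det_step A _ _ _ _ _ _ _ _ _ _ _ _ _ HC H0 Hin Hin' Ht Hs Hs') as [E1 [E2 E3]].
    subst.
    eapply IH; [|exact He'].
    eapply exec_app; [exact H0|]. eapply exec_cons; [exact Hin|exact Ht|exact Hs|constructor].
Qed.

Lemma sim {Sigma L C : finType} (A : TA Sigma L C) : CTA A ->
  forall l nu1 w1 ds1 h1 la na, exec A l nu1 w1 ds1 h1 la na ->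
  forall nu2 w2 ds2 h2 lb nb w0 ds0 g0 w0' ds0' g0',
  exec A (l0 A) (@zero_val C) w0 ds0 g0 l nu1 ->
  exec A (l0 A) (@zero_val C) w0' ds0' g0' l nu2 ->
  exec A l nu2 w2 ds2 h2 lb nb ->
  region_of A h1 = region_of A h2 ->
  la = lb /\ resets h1 = resets h2.
Proof.
  intros HC. induction 1 as [l nu|l nu s t phi B l1 w ds g l' nu' Hin Ht Hs He IH];
    intros nu2 w2 ds2 h2 lb nb w0 ds0 g0 w0' ds0' g0' H0 H0' H2 Hr.
  - destruct h2; last discriminate.
    destruct (exec_nil_inv _ _ _ _ _ _ _ H2). subst; auto.
  - destruct h2 as [|a h2]; first discriminate.
    apply exec_cons_inv in H2.
    destruct H2 as [s' [t' [phi' [B' [l1' [w' [ds' [Ea [Ew [Eds [Hin' [Ht' [Hs' He']]]]]]]]]]]]].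
    subst a. simpl in Hr. case: Hr => Es Ereg Erest. subst s'.
    have Hs'' := sat_transfer A _ _ _ _ _ _ _ Hin' Ereg Hs'.
    destruct (det_step A _ _ _ _ _ _ _ _ _ _ _ _ _ HC H0 Hin Hin' Ht Hs Hs'') as [E1 [E2 E3]].
    subst.
    have P1 : exec A (l0 A) (@zero_val C) (w0 ++ [:: (s, t)]) (ds0 ++ [:: (l, s, phi', B', l1')])
       (g0 ++ [:: (s, Defs.shift nu t, B')]) l1' (Defs.reset B' (Defs.shift nu t)).
      eapply exec_app; [exact H0|]. eapply exec_cons; [exact Hin|exact Ht|exact Hs|constructor].
    have P2 : exec A (l0 A) (@zero_val C) (w0' ++ [:: (s, t')]) (ds0' ++ [:: (l, s, phi', B', l1')])
       (g0' ++ [:: (s, Defs.shift nu2 t', B')]) l1' (Defs.reset B' (Defs.shift nu2 t')).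
      eapply exec_app; [exact H0'|]. eapply exec_cons; [exact Hin'|exact Ht'|exact Hs'|constructor].
    destruct (IH _ _ _ _ _ _ _ _ _ _ _ _ P1 P2 He' Erest) as [Ea Eb].
    split; first exact Ea. simpl. by rewrite Eb.
Qed.

Theorem lemma3p8 (Sigma L C : finType) (A : TA Sigma L C)
  (g1 g2 : rcword Sigma C) (l1 l2 : L) (nu1 nu2 : valuation C) :
  CTA A ->
  reaches A g1 l1 nu1 ->
  reaches A g2 l2 nu2 ->
  sym_state A l1 nu1 = sym_state A l2 nu2 ->
  rc_equiv A g1 g2.
Proof.
  intros HC [wa1 [dsa1 R1]] [wa2 [dsa2 R2]] Hsym xi g1' g2' [Rx1 V1] [Rx2 V2].
  case: Hsym => El _. subst l2.
  have N0 : exec A (l0 A) (@zero_val C) [::] [::] [::] (l0 A) (@zero_val C) by constructor.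
  have Split1 : forall h w ds lf nf, exec A (l0 A) (@zero_val C) w ds (g1 ++ h) lf nf ->
      exists w' ds', exec A l1 nu1 w' ds' h lf nf.
    intros h w ds lf nf E.
    destruct (exec_split A _ _ _ _ _ _ _ _ E) as [w1 [w2 [ds1 [ds2 [lm [nm [P S]]]]]]].
    destruct (det_exec A HC _ _ _ _ _ _ _ P _ _ _ _ _ _ _ N0 R1) as [-> ->].
    eauto.
  have Split2 : forall h w ds lf nf, exec A (l0 A) (@zero_val C) w ds (g2 ++ h) lf nf ->
      exists w' ds', exec A l1 nu2 w' ds' h lf nf.
    intros h w ds lf nf E.
    destruct (exec_split A _ _ _ _ _ _ _ _ E) as [w1 [w2 [ds1 [ds2 [lm [nm [P S]]]]]]].
    destruct (det_exec A HC _ _ _ _ _ _ _ P _ _ _ _ _ _ _ N0 R2) as [-> ->].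
    eauto.
  have Rreg : region_of A g1' = region_of A g2' by rewrite Rx1 Rx2.
  destruct V1 as [w1 [ds1 [lf1 [nf1 E1]]]].
  destruct V2 as [w2 [ds2 [lf2 [nf2 E2]]]].
  destruct (Split1 _ _ _ _ _ E1) as [w1' [ds1' S1]].
  destruct (Split2 _ _ _ _ _ E2) as [w2' [ds2' S2]].
  split.
  - split.
    + intros [w [ds [lf [nf [E F]]]]].
      destruct (Split1 _ _ _ _ _ E) as [w' [ds' S]].
      destruct (sim A HC _ _ _ _ _ _ _ S _ _ _ _ _ _ _ _ _ _ _ _ R1 R2 S2 Rreg) as [Eq _].
      exists w2, ds2, lf2, nf2. split; [exact E2|]. by rewrite -Eq.
    + intros [w [ds [lf [nf [E F]]]]].
      destruct (Split2 _ _ _ _ _ E) as [w' [ds' S]].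
      destruct (sim A HC _ _ _ _ _ _ _ S _ _ _ _ _ _ _ _ _ _ _ _ R2 R1 S1 (esym Rreg)) as [Eq _].
      exists w1, ds1, lf1, nf1. split; [exact E1|]. by rewrite -Eq.
  - exact: (proj2 (sim A HC _ _ _ _ _ _ _ S1 _ _ _ _ _ _ _ _ _ _ _ _ R1 R2 S2 Rreg)).
Qed.
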